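(* Let $F$ be a smooth symmetric 2-cotensor on the unit sphere $\mathbb{S}^{n-1}\subset\mathbb{R}^n$, and write $F(x,V,V)$ for its value at $x\in\mathbb{S}^{n-1}$ on $V\in T_x\mathbb{S}^{n-1}$. Suppose there is $k\in\mathbb{N}$ such that for every unit speed great-circle geodesic $\gamma$ of $\mathbb{S}^{n-1}$, $$I_k(F,\gamma)=\int_0^\pi F(\gamma(t),\gamma'(t),\gamma'(t))(\sin t)^k\,dt=0.$$ Then (i) $F$ has the parity of $k$: for every such $\gamma$ and all $t$, $F(\gamma(t),\gamma'(t),\gamma'(t))=(-1)^kF(\gamma(t+\pi),\gamma'(t+\pi),\gamma'(t+\pi))$; (ii) for every such $\gamma$ and every polynomial $p$ on $\mathbb{R}^n$ of degree at most $k$, $$\int_0^{2\pi}p(\gamma(t))\,F(\gamma(t),\gamma'(t),\gamma'(t))\,dt=0.$$ *)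

(* Defs.v *)
From HB Require Import structures.
From mathcomp Require Import all_boot all_order all_algebra.
From mathcomp Require Import all_classical all_reals all_analysis.
From mathcomp Require mpoly.
Set Implicit Arguments. Unset Strict Implicit. Unset Printing Implicit Defensive.
Import Order.TTheory GRing.Theory Num.Theory.
Import numFieldNormedType.Exports.
Local Open Scope ring_scope.

Section Defs.
Variables (R : realType) (n : nat).

Definition dotv (x y : 'rV[R]_n) : R := (x *m y^T) 0 0.

(* (x, v) determines a unit speed great-circle geodesic of S^{n-1}:
   x on the sphere, v a unit tangent vector at x. *)
Definition unit_geod (x v : 'rV[R]_n) : Prop :=
  [/\ dotv x x = 1, dotv v v = 1 & dotv x v = 0].

Definition gc (x v : 'rV[R]_n) (t : R) : 'rV[R]_n := cos t *: x + sin t *: v.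
Definition gc' (x v : 'rV[R]_n) (t : R) : 'rV[R]_n := - sin t *: x + cos t *: v.

(* F(y, V, V) for a symmetric 2-cotensor represented by a matrix field. *)
Definition tens (F : 'rV[R]_n -> 'M[R]_n) (y V : 'rV[R]_n) : R :=
  (V *m F y *m V^T) 0 0.

Fixpoint iter_dderiv (vs : seq 'rV[R]_n) (f : 'rV[R]_n -> R) : 'rV[R]_n -> R :=
  match vs with
  | [::] => f
  | w :: vs' => fun y => derive (iter_dderiv vs' f) y w
  end.

Definition smooth (f : 'rV[R]_n -> R) : Prop :=
  forall vs, continuous (iter_dderiv vs f) /\
             forall y w, derivable (iter_dderiv vs f) y w.

Definition Ik (k : nat) (F : 'rV[R]_n -> 'M[R]_n) (x v : 'rV[R]_n) : \bar R :=
  (\int[lebesgue_measure]_(t in `[0%R, (pi : R)]) (tens F (gc x v t) (gc' x v t) * sin t ^+ k)%:E)%E.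

Definition peval (p : mpoly.mpoly n R) (y : 'rV[R]_n) : R :=
  mpoly.meval (fun i => y 0 i) p.

Definition pdeg_le (p : mpoly.mpoly n R) (k : nat) : bool :=
  all (fun m => (mpoly.mdeg m <= k)%N) (mpoly.msupp p).

End Defs.

(* Main.v *)
Require Import Defs.
From HB Require Import structures.
From mathcomp Require Import all_boot all_order all_algebra.
From mathcomp Require Import all_classical all_reals all_analysis.
From mathcomp Require mpoly.
Import Order.TTheory GRing.Theory Num.Theory.
Import numFieldNormedType.Exports.
Local Open Scope ring_scope.

From mathcomp Require Import ring zify.
Set Implicit Arguments. Unset Strict Implicit.

Lemma alg9 (R : comNzRingType) (a b c d p q : R) :
  (a * p + b * q) * (c * p + d * q) = a * c * (p * p) + (a * d + b * c) * (p * q) + b * d * (q * q).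
Proof. ring. Qed.
Lemma alg10 (R : comNzRingType) (a b c d e g p q : R) :
  a * (b * p + c * q) + d * (e * p + g * q) = (a * b + d * e) * p + (a * c + d * g) * q.
Proof. ring. Qed.
Lemma alg11 (R : comNzRingType) (a b c d : R) : c * a + d * - b = a * c - b * d.
Proof. ring. Qed.
Lemma alg12 (R : comNzRingType) (a b c d : R) : c * b + d * a = b * c + a * d.
Proof. ring. Qed.
Lemma alg13 (R : comNzRingType) (a b c d : R) : - d * a + c * - b = - (b * c + a * d).
Proof. ring. Qed.
Lemma alg14 (R : comNzRingType) (a b c d : R) : - d * b + c * a = a * c - b * d.
Proof. ring. Qed.
Lemma alg15 (R : comNzRingType) (a b : R) : a ^+ 2 + b ^+ 2 = 1 ->
  a * a * 1 + (a * b + b * a) * 0 + b * b * 1 = 1.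
Proof. by move=> h; rewrite !mulr1 mulr0 addr0 -!expr2. Qed.
Lemma alg16 (R : comNzRingType) (a b : R) : a ^+ 2 + b ^+ 2 = 1 ->
  - b * - b * 1 + (- b * a + a * - b) * 0 + a * a * 1 = 1.
Proof. by move=> h; rewrite !mulr1 mulr0 addr0 mulrNN -!expr2 addrC. Qed.
Lemma alg17 (R : comNzRingType) (a b : R) :
  a * - b * 1 + (a * a + b * - b) * 0 + b * a * 1 = 0.
Proof. ring. Qed.


Lemma alg1 (R : comNzRingType) (k a b : R) : b * (k * a * b) = k * a * b ^+ 2.
Proof. ring. Qed.
Lemma alg2 (R : comNzRingType) (j : nat) (a : R) :
  a ^+ j.+1 * - a + j.+1%:R * a ^+ j * (1 - a ^+ 2) = j.+1%:R * a ^+ j - j.+2%:R * a ^+ j.+2.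
Proof. rewrite !exprS -[j.+2]addn1 -[j.+1]addn1 !natrD; move: (a ^+ j) => b; ring. Qed.

Lemma alg3 (R : comNzRingType) (x a b y z : R) :
  x * (a * y - b * z) = a * (x * y) - b * (x * z).
Proof. ring. Qed.

Lemma alg4 (R : comNzRingType) (x s2 ca sb : R) :
  x * (ca * (1 - s2) * sb) = x * (ca * sb) - x * (ca * (sb * s2)).
Proof. ring. Qed.

Lemma alg6 (R : comNzRingType) (x y z ca sb fu : R) :
  x * ca * (y * sb) * (z * fu) = x * y * z * (ca * sb * fu).
Proof. ring. Qed.

Lemma alg7 (R : comNzRingType) (al be c s ca sb : R) :
  (al * c + be * s) * (ca * sb) = al * (c * ca * sb) + be * (ca * (s * sb)).
Proof. ring. Qed.

Section Key.
Local Open Scope classical_set_scope.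
Context {R : realType}.
Notation mu := (@lebesgue_measure R).

Lemma cont_int (h : R -> R) (a b : R) : continuous h ->
  mu.-integrable `[a, b] (EFin \o h).
Proof.
move=> ch; apply: continuous_compact_integrable; first exact: segment_compact.
by apply: continuous_subspaceT.
Qed.

Lemma is_derive_shift (P : R -> R) (c x dp : R) :
  is_derive (x + c) 1 P dp -> is_derive x 1 (fun s => P (s + c)) dp.
Proof.
move=> dP.
have h : is_derive x 1 (fun s : R => s + c) 1.
  by apply: is_derive_eq; rewrite addr0.
have := @is_derive1_comp R P (fun s => s + c) x dp 1 dP h; rewrite mulr1.
by [].
Qed.




Lemma is_deriveMc (h : R -> R) (c x dh : R) :
  is_derive x 1 h dh -> is_derive x 1 (fun s => h s * c) (dh * c).
Proof.
move=> d; have := is_deriveM d (is_derive_cst c x 1).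
by move=> H; apply: is_derive_eq; rewrite scaler0 add0r /GRing.scale /= mulrC.
Qed.

Lemma cont_of_der (h : R -> R) (x dh : R) : is_derive x 1 h dh -> {for x, continuous h}.
Proof.
move=> d; apply: differentiable_continuous; apply/derivable1_diffP.
exact: ex_derive.
Qed.

Lemma key (f g g' : R -> R) : continuous f -> (forall x : R, is_derive x (1:R) g (g' x)) ->
  continuous g' ->
  (forall s, \int[mu]_(u in `[0, pi]) (f (s + u) * g u) = 0) ->
  forall s, f (s + pi) * g pi - f s * g 0 = \int[mu]_(u in `[0, pi]) (f (s + u) * g' u).
Proof.
move=> cf dg cg' H0 s0.
pose a := s0 - 1.
pose P t := \int[mu]_(w in `[a, t]) f w.
have dP : forall t, a < t -> is_derive t 1 P (f t).
  move=> t at_.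
  have [d e] := @continuous_FTC1_closed R f a t (t + 1) (ltr_pwDr ltr01 (lexx t)) (cont_int _ _ cf) at_ (cf t).
  by apply: DeriveDef => //; rewrite -derive1E.
have pi0 : (0:R) < pi := pi_gt0 R.
pose H s := \int[mu]_(u in `[0, pi]) (P (s + u) * g' u).
pose Bd s := P (s + pi) * g pi - P s * g 0.
have ibp : forall s, a < s -> H s = Bd s.
  move=> s as_.
  have dPs : forall u : R, 0 <= u -> is_derive u (1:R) (fun u => P (s + u)) (f (s + u)).
    move=> u u0; rewrite (_ : (fun u => P (s + u)) = (fun u => P (u + s))); last first.
      by apply/funext => w; rewrite addrC.
    apply: is_derive_shift; rewrite addrC; apply: dP.
    by rewrite (lt_le_trans as_) // lerDl.
  have := @Rintegration_by_parts R (fun u => P (s + u)) g (fun u => f (s + u)) g' 0 pi pi0.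
  rewrite /H /Bd.
  have -> : \int[mu]_(x in `[0, pi]) (f (s + x) * g x) = 0 by exact: H0.
  rewrite subr0 addr0; apply.
  - apply: continuous_subspaceT => u; apply: continuous_comp; last exact: cf.
    by apply: cvgD; [exact: cvg_cst|exact: cvg_id].
  - split.
    + move=> u; rewrite in_itv/= => /andP[u0 _].
      by case: (dPs u (ltW u0)).
    + apply: cvg_at_right_filter; exact: cont_of_der (dPs 0 (lexx 0)).
    + apply: cvg_at_left_filter; exact: cont_of_der (dPs pi (ltW pi0)).
  - move=> u; rewrite in_itv/= => /andP[u0 _].
    by rewrite derive1E (@derive_val _ _ _ _ _ _ _ (dPs u (ltW u0))).
  - exact: continuous_subspaceT.
  - split.
    + by move=> u _; case: (dg u).
    + apply: cvg_at_right_filter; exact: cont_of_der (dg 0).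
    + apply: cvg_at_left_filter; exact: cont_of_der (dg pi).
  - by move=> u _; rewrite derive1E (@derive_val _ _ _ _ _ _ _ (dg u)).
have as0 : a < s0 by rewrite /a ltrBlDr ltrDl.
have dBd : is_derive s0 (1:R) Bd (f (s0 + pi) * g pi - f s0 * g 0).
  apply: is_deriveB; apply: is_deriveMc.
    by apply: is_derive_shift; apply: dP; rewrite (lt_le_trans as0) // lerDl ltW.
  exact: dP.
have nearH : \forall s \near s0, Bd s = H s.
  near=> s; rewrite ibp //.
  by near: s; apply: (cvgr_gt s0 (@cvg_id _ _)).
have dH := near_eq_is_derive nearH dBd.
pose b := s0 + 1 + pi.
have s0b : s0 < b by rewrite /b -addrA ltrDl addr_gt0.
have [c1 _ Hc1] := @EVT_max R (fun t => `|f t|) a b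
  (ltW (lt_trans as0 s0b)) (continuous_subspaceT (fun x => continuous_comp (cf x) (@norm_continuous _ _ _))).
have [c2 _ Hc2] := @EVT_max R (fun t => `|g' t|) 0 pi (ltW pi0)
  (continuous_subspaceT (fun x => continuous_comp (cg' x) (@norm_continuous _ _ _))).
pose M := `|f c1| * `|g' c2|.
pose ff := fun (s u : R) => P (s + u) * g' u.
have Iab : forall x y : R, `]a, s0 + 1[%classic x -> `[0, pi]%classic y -> a < x + y /\ x + y <= b.
  move=> x y; rewrite /= !in_itv/= => /andP[ax xs] /andP[y0 ypi]; split.
    by rewrite (lt_le_trans ax) // lerDl.
  by rewrite /b lerD // ltW.
have dff : forall x y : R, `]a, s0 + 1[%classic x -> `[0, pi]%classic y ->
    is_derive x (1:R) (ff ^~ y) (f (x + y) * g' y).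
  move=> x y Ix Iy; apply: is_deriveMc; apply: is_derive_shift; apply: dP.
  by case: (Iab x y Ix Iy).
have Is0 : `]a, s0 + 1[%classic s0 by rewrite /= in_itv/= as0 ltrDl ltr01.
have dPx : forall x u : R, a < x + u -> is_derive u (1:R) (fun u => P (x + u)) (f (x + u)).
  move=> x u xu; rewrite (_ : (fun u => P (x + u)) = (fun u => P (u + x))); last first.
    by apply/funext => w; rewrite addrC.
  by apply: is_derive_shift; rewrite addrC; apply: dP.
have intf : forall x : R, `]a, s0 + 1[%classic x -> mu.-integrable `[0, pi] (EFin \o ff x).
  move=> x Ix; apply: continuous_compact_integrable; first exact: segment_compact.
  apply: continuous_in_subspaceT => u; rewrite inE => Iu.
  apply: cvgM; last exact: cg'.
  by apply: (cont_of_der (dPx x u _)); case: (Iab x u Ix Iu).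
have derf1 : forall x y : R, `]a, s0 + 1[%classic x -> `[0, pi]%classic y -> derivable (ff ^~ y) x 1.
  by move=> x y Ix Iy; case: (dff x y Ix Iy).
have M0 : forall y : R, 0 <= (fun=> M) y by move=> y; rewrite /M mulr_ge0.
have intG : mu.-integrable `[0, pi] (EFin \o (fun=> M)) by apply: cont_int; exact: cst_continuous.
have Gub : forall x y : R, `]a, s0 + 1[%classic x -> `[0, pi]%classic y -> `|partial1of2 ff x y| <= (fun=> M) y.
  move=> x y Ix Iy; rewrite partial1of2E (@derive_val _ _ _ _ _ _ _ (dff x y Ix Iy)).
  rewrite normrM /M; apply: ler_pM => //.
    by apply: Hc1; case: (Iab x y Ix Iy) => h1 h2; rewrite in_itv/= h2 ltW.
  by apply: Hc2; move: Iy; rewrite /= in_itv/=.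
have := @differentiation_under_integral R _ _ mu ff `[0, pi] (measurable_itv _) s0 a (s0 + 1) Is0 intf derf1 _ M0 intG Gub.
rewrite derive1E (@derive_val _ _ _ _ _ _ _ dH) => ->.
apply: eq_Rintegral => y; rewrite inE => Iy.
by rewrite /= partial1of2E (@derive_val _ _ _ _ _ _ _ (dff s0 y Is0 Iy)).
Unshelve. all: by end_near.
Qed.

Definition Sk (f : R -> R) (j : nat) (s : R) :=
  \int[mu]_(u in `[0, pi]) (f (s + u) * sin u ^+ j).
Definition Ck (f : R -> R) (j : nat) (s : R) :=
  \int[mu]_(u in `[0, pi]) (f (s + u) * (sin u ^+ j * cos u)).

Lemma cont_der (h h' : R -> R) : (forall x : R, is_derive x (1:R) h (h' x)) -> continuous h.
Proof. by move=> d x; exact: cont_of_der (d x). Qed.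

Lemma cont_shiftM (f h : R -> R) (s : R) : continuous f -> continuous h ->
  continuous (fun u => f (s + u) * h u).
Proof.
move=> cf ch u; apply: cvgM; last exact: ch.
apply: continuous_comp; last exact: cf.
by apply: cvgD; [exact: cvg_cst|exact: cvg_id].
Qed.

Lemma cont_scale (h : R -> R) (k : R) : continuous h -> continuous (fun x => k * h x).
Proof. by move=> ch x; apply: cvgM; [exact: cvg_cst|exact: ch]. Qed.

Lemma contX (h : R -> R) (n : nat) : continuous h -> continuous (fun u => h u ^+ n).
Proof.
move=> ch; elim: n => [|n IH] x.
  under eq_fun do rewrite expr0; exact: cst_continuous.
under eq_fun do rewrite exprS; apply: cvgM; [exact: ch|exact: IH].
Qed.

Lemma dsinX (j : nat) (x : R) :
  is_derive x (1:R) (fun u : R => sin u ^+ j) (j%:R * sin x ^+ j.-1 * cos x).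
Proof.
have H := is_deriveX j (is_derive_sin x).
rewrite exprfctE in H.
by apply: (is_derive_eq H).
Qed.

Lemma contsinX (j : nat) : continuous (fun u : R => sin u ^+ j).
Proof. exact: cont_der (dsinX j). Qed.

Lemma contsinXcos (j : nat) : continuous (fun u : R => sin u ^+ j * cos u).
Proof.
move=> x; apply: cvgM; first exact: contsinX.
exact: cont_of_der (is_derive_cos x).
Qed.

Lemma intc (h : R -> R) : continuous h -> mu.-integrable `[0, pi] (EFin \o h).
Proof. exact: cont_int. Qed.

Lemma recA (f : R -> R) (j : nat) : continuous f ->
  (forall s, Sk f j.+1 s = 0) -> forall s, Ck f j s = 0.
Proof.
move=> cf H0 s.
have cg : continuous (fun u : R => j.+1%:R * sin u ^+ j * cos u).
  move=> x; apply: cvgM; last exact: cont_of_der (is_derive_cos x).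
  apply: cvgM; [exact: cvg_cst|exact: contsinX].
have := @key f (fun u => sin u ^+ j.+1) (fun u => j.+1%:R * sin u ^+ j * cos u) cf (dsinX j.+1) cg H0 s.
rewrite sinpi sin0 expr0n /= !mulr0 subr0 => /esym h.
have e : \int[mu]_(u in `[0, pi]) (f (s + u) * (j.+1%:R * sin u ^+ j * cos u)) = j.+1%:R * Ck f j s.
  rewrite /Ck -RintegralZl //; last exact/intc/cont_shiftM/contsinXcos.
  by apply: eq_Rintegral => u _; ring.
move: h; rewrite e => /eqP; rewrite mulf_eq0 pnatr_eq0 /= => /eqP.
by [].
Qed.

Lemma recB (f : R -> R) (j : nat) : continuous f ->
  (forall s, Ck f j.+1 s = 0) -> forall s, j.+1%:R * Sk f j s = j.+2%:R * Sk f j.+2 s.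
Proof.
move=> cf H0 s.
pose g' := fun u : R => j.+1%:R * sin u ^+ j - j.+2%:R * sin u ^+ j.+2.
have dg : forall x : R, is_derive x (1:R) (fun u : R => sin u ^+ j.+1 * cos u) (g' x).
  move=> x; have H := is_deriveM (dsinX j.+1 x) (is_derive_cos x).
  have hc : cos x ^+ 2 = 1 - sin x ^+ 2 by rewrite -(cos2Dsin2 x) addrK.
  have e : sin x ^+ j.+1 * - sin x + cos x * (j.+1%:R * sin x ^+ j.+1.-1 * cos x) = g' x.
    have -> : cos x * (j.+1%:R * sin x ^+ j.+1.-1 * cos x) = j.+1%:R * sin x ^+ j * cos x ^+ 2.
      by rewrite /= alg1.
    by rewrite hc /g' alg2.
  by apply: (is_derive_eq H); rewrite -e.
have cg : continuous g'.
  move=> x; apply: cvgB; apply: cvgM; (exact: cvg_cst || exact: contsinX).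
have := @key f _ g' cf dg cg H0 s.
rewrite sinpi sin0 !expr0n /= !mul0r !mulr0 subr0 => /esym h.
have e : \int[mu]_(u in `[0, pi]) (f (s + u) * g' u) =
    j.+1%:R * Sk f j s - j.+2%:R * Sk f j.+2 s.
  rewrite /Sk -!RintegralZl //; try exact/intc/cont_shiftM/contsinX.
  rewrite -RintegralB //; try exact/intc/cont_scale/cont_shiftM/contsinX.
  by apply: eq_Rintegral => u _; rewrite /g' alg3.
by move: h; rewrite e => /eqP; rewrite subr_eq0 => /eqP.
Qed.

Lemma recC (f : R -> R) : continuous f ->
  (forall s, Sk f 0 s = 0) -> forall s, f (s + pi) = f s.
Proof.
move=> cf H0 s.
have dg : forall x : R, is_derive x (1:R) (fun u : R => (1:R)) ((fun _ => (0:R)) x) by move=> x; exact: is_derive_cst.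
have H0' : forall s, \int[mu]_(u in `[0, pi]) (f (s + u) * (fun _ => 1) u) = 0.
  by move=> t; rewrite -[RHS](H0 t) /Sk; apply: eq_Rintegral => u _ /=; rewrite expr0.
have := @key f _ _ cf dg (@cst_continuous _ _ _) H0' s.
rewrite !mulr1 (@eq_Rintegral _ _ _ _ _ (fun _ => 0)); last by move=> u _; rewrite mulr0.
rewrite Rintegral_cst // mul0r => /eqP; rewrite subr_eq0 => /eqP.
by [].
Qed.

Lemma recD (f : R -> R) : continuous f ->
  (forall s, Ck f 0 s = 0) -> (forall s, Sk f 1 s = 0) -> forall s, f (s + pi) = - f s.
Proof.
move=> cf H0 H1 s.
have dg : forall x : R, is_derive x (1:R) cos ((fun u => - sin u) x) by move=> x; exact: is_derive_cos.
have H0' : forall s, \int[mu]_(u in `[0, pi]) (f (s + u) * cos u) = 0.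
  by move=> t; rewrite -[RHS](H0 t) /Ck; apply: eq_Rintegral => u _ /=; rewrite expr0 mul1r.
have cg : continuous (fun u : R => - sin u).
  by move=> x; apply: cvgN; exact: cont_of_der (is_derive_sin x).
have := @key f _ _ cf dg cg H0' s.
have -> : \int[mu]_(x in `[0, pi]) (f (s + x) * - sin x) = - Sk f 1 s.
  rewrite /Sk -mulN1r -RintegralZl //; last exact/intc/cont_shiftM/contsinX.
  by apply: eq_Rintegral => u _; rewrite expr1 mulN1r mulrN.
rewrite cospi cos0 H1 oppr0 mulr1 mulrN1 => /eqP; rewrite subr_eq0 => /eqP <-.
by rewrite opprK.
Qed.

Lemma chain (f : R -> R) (k : nat) : continuous f -> (forall s, Sk f k s = 0) ->
  forall i, (2 * i <= k)%N ->
  (forall s, Sk f (k - 2 * i) s = 0) /\ ((0 < k - 2 * i)%N -> forall s, Ck f (k - 2 * i).-1 s = 0).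
Proof.
move=> cf H0; elim=> [|i IH] hi.
  rewrite muln0 subn0; split => // k0.
  by case: k k0 H0 {hi} => // k' _ H0'; exact: recA.
have [IS IC] : _ := IH (ltac:(lia)).
have em : (k - 2 * i = (k - 2 * i.+1).+2)%N by lia.
rewrite em /= in IS IC.
set m := (k - 2 * i.+1)%N in IS IC *.
have Sm : forall s, Sk f m s = 0.
  move=> s; have := recB cf (IC isT) s; rewrite IS mulr0 => /eqP.
  by rewrite mulf_eq0 pnatr_eq0 /= => /eqP.
split => // m0 s.
by case: m Sm m0 {IS IC em} => // m' Sm' _; exact: recA.
Qed.

Lemma parity (f : R -> R) (k : nat) : continuous f -> (forall s, Sk f k s = 0) ->
  forall s, f s = (-1) ^+ k * f (s + pi).
Proof.
move=> cf H0 s.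
have [IS IC] := chain cf H0 (leq_trans (leqnn _) (ltac:(lia) : (2 * k./2 <= k)%N)).
have ek : (k - 2 * k./2 = odd k)%N by lia.
rewrite ek in IS IC.
rewrite -signr_odd; case: (odd k) IS IC => /= IS IC.
  by rewrite (recD cf (IC isT) IS) expr1 mulN1r opprK.
by rewrite (recC cf IS) expr0 mul1r.
Qed.

Lemma T0 (f : R -> R) (k : nat) : continuous f -> (forall s, Sk f k s = 0) ->
  forall a b, (a + b <= k)%N -> odd (a + b) = odd k ->
  \int[mu]_(u in `[0, pi]) (f u * (cos u ^+ a * sin u ^+ b)) = 0.
Proof.
move=> cf H0.
have ccos : continuous (@cos R) by move=> x; exact: cont_of_der (is_derive_cos x).
have cm : forall a b, continuous (fun u : R => f u * (cos u ^+ a * sin u ^+ b)).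
  move=> a b x; apply: cvgM; first exact: cf.
  apply: cvgM; last exact: contsinX.
  exact: contX.
move=> a; elim: a {-2}a (leqnn a) => [|n IHn] a.
  rewrite leqn0 => /eqP -> b /= hb hodd.
  have [IS _] := chain cf H0 (ltac:(lia) : (2 * ((k - b) %/ 2) <= k)%N).
  have eb : (k - 2 * ((k - b) %/ 2) = b)%N.
    move: hodd; rewrite add0n => hodd.
    have : odd (k - b) = false by rewrite oddB // hodd addbb.
    lia.
  rewrite eb in IS; rewrite -[RHS](IS 0) /Sk.
  by apply: eq_Rintegral => u _; rewrite add0r expr0 mul1r.
move=> ha b hb hodd.
case: a ha hb hodd => [|[|a]] ha hb hodd.
- by apply: IHn.
- have [_ IC] := chain cf H0 (ltac:(lia) : (2 * ((k - b.+1) %/ 2) <= k)%N).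
  have eb : (k - 2 * ((k - b.+1) %/ 2) = b.+1)%N.
    move: hodd; rewrite add1n => hodd.
    have : odd (k - b.+1) = false by rewrite oddB // hodd addbb.
    lia.
  rewrite eb in IC; rewrite -[RHS](IC isT 0) /Ck.
  by apply: eq_Rintegral => u _; rewrite add0r expr1 /= [sin _ ^+ _ * _]mulrC.
- have e1 := IHn a (ltac:(lia)) b (ltac:(lia)) (ltac:(move: hodd; rewrite !addSn /=; by rewrite negbK)).
  have e2 := IHn a (ltac:(lia)) b.+2 (ltac:(lia)) (ltac:(move: hodd; rewrite !addSn !addnS /=; by rewrite negbK)).
  transitivity (\int[mu]_(u in `[0, pi]) (f u * (cos u ^+ a * sin u ^+ b) - f u * (cos u ^+ a * sin u ^+ b.+2))); last first.
    by rewrite RintegralB ?e1 ?e2 ?subr0 //; exact: intc.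
  apply: eq_Rintegral => u _.
  have hc : cos u ^+ 2 = 1 - sin u ^+ 2 by rewrite -(cos2Dsin2 u) addrK.
  rewrite -[a.+2]addn2 -[b.+2]addn2 !exprD hc.
  move: (f u) (sin u ^+ 2) (cos u ^+ a) (sin u ^+ b) => x s2 ca sb.
  by rewrite alg4.
Qed.

Lemma primD (phi : R -> R) (c t : R) : continuous phi -> c < t ->
  is_derive t (1:R) (fun t => \int[mu]_(w in `[c, t]) phi w) (phi t).
Proof.
move=> cp ct.
have [d e] := @continuous_FTC1_closed R phi c t (t + 1) (ltr_pwDr ltr01 (lexx t)) (cont_int _ _ cp) ct (cp t).
by apply: DeriveDef => //; rewrite -derive1E.
Qed.

Lemma ftcR (phi Phi : R -> R) (a b : R) : a < b -> continuous phi ->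
  (forall x, a <= x <= b -> is_derive x (1:R) Phi (phi x)) ->
  \int[mu]_(x in `[a, b]) phi x = Phi b - Phi a.
Proof.
move=> ab cp dP.
have := @continuous_FTC2 R phi Phi a b ab (continuous_subspaceT cp).
rewrite /Rintegral => -> //.
- split.
  + by move=> x; rewrite in_itv/= => /andP[h1 h2]; case: (dP x (ltac:(by rewrite (ltW h1) (ltW h2)))).
  + apply: cvg_at_right_filter; apply: (cont_of_der (dP a _)); by rewrite lexx ltW.
  + apply: cvg_at_left_filter; apply: (cont_of_der (dP b _)); by rewrite lexx ltW.
- move=> x; rewrite in_itv/= => /andP[h1 h2].
  by rewrite derive1E (@derive_val _ _ _ _ _ _ _ (dP x (ltac:(by rewrite (ltW h1) (ltW h2))))).
Qed.

Lemma split2pi (phi : R -> R) : continuous phi ->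
  \int[mu]_(x in `[0, 2 * pi]) phi x =
  \int[mu]_(x in `[0, pi]) phi x + \int[mu]_(x in `[0, pi]) phi (x + pi).
Proof.
move=> cp.
pose Q (t : R) := \int[mu]_(w in `[-1, t]) phi w.
have pi0 : (0:R) < pi := pi_gt0 R.
have dQ : forall x : R, 0 <= x -> is_derive x (1:R) Q (phi x).
  by move=> x x0; apply: primD => //; rewrite (lt_le_trans _ x0) // ltrN10.
have e2 : 2 * pi = pi + pi :> R by rewrite mulr2n mulrDl mul1r.
have dQ' : forall x : R, 0 <= x <= 2 * pi -> is_derive x (1:R) Q (phi x).
  by move=> x /andP[x0 _]; apply: dQ.
have dQ'' : forall x : R, 0 <= x <= pi -> is_derive x (1:R) Q (phi x).
  by move=> x /andP[x0 _]; apply: dQ.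
have dQ3 : forall x : R, 0 <= x <= pi -> is_derive x (1:R) (fun x => Q (x + pi)) (phi (x + pi)).
  move=> x /andP[x0 _]; apply: is_derive_shift; apply: dQ.
  by rewrite addr_ge0 // ltW.
have cp3 : continuous (fun x => phi (x + pi)).
  by move=> x; apply: continuous_comp; [apply: cvgD; [exact: cvg_id|exact: cvg_cst]|exact: cp].
rewrite (ftcR (mulr_gt0 _ pi0) cp dQ') ?ltr0n // (ftcR pi0 cp dQ'') (ftcR pi0 cp3 dQ3).
by rewrite add0r e2; set u := Q (pi + pi); set w := Q pi; set z := Q 0; move: u w z => u w z; ring.
Qed.

Lemma fullmono (f : R -> R) (k : nat) : continuous f -> (forall s, Sk f k s = 0) ->
  forall a b, (a + b <= k)%N ->
  \int[mu]_(u in `[0, 2 * pi]) ((cos u ^+ a * sin u ^+ b) * f u) = 0.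
Proof.
move=> cf H0 a b hab.
have ccos : continuous (@cos R) by move=> x; exact: cont_of_der (is_derive_cos x).
have csin : continuous (@sin R) by move=> x; exact: cont_of_der (is_derive_sin x).
have cm : continuous (fun u : R => (cos u ^+ a * sin u ^+ b) * f u).
  move=> x; apply: cvgM; last exact: cf.
  by apply: cvgM; [exact: contX|exact: contX].
have hf : forall u, f (u + pi) = (-1) ^+ k * f u.
  move=> u; rewrite [in RHS](parity cf H0 u) mulrA -exprD addnn.
  by rewrite -signr_odd odd_double expr0 mul1r.
rewrite split2pi //.
set T := \int[mu]_(x in `[0, pi]) (cos x ^+ a * sin x ^+ b * f x).
have e : \int[mu]_(x in `[0, pi]) (cos (x + pi) ^+ a * sin (x + pi) ^+ b * f (x + pi)) =
    (-1) ^+ (a + b + k) * T.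
  rewrite /T -RintegralZl //; last exact: intc.
  apply: eq_Rintegral => u _; rewrite cosDpi sinDpi hf (exprNn (cos u)) (exprNn (sin u)) !exprD.
  by move: ((-1) ^+ a) ((-1) ^+ b) ((-1) ^+ k) (cos u ^+ a) (sin u ^+ b) (f u) => x y z ca sb fu; rewrite alg6.
rewrite e.
have ET : T = \int[mu]_(u in `[0, pi]) (f u * (cos u ^+ a * sin u ^+ b)).
  by apply: eq_Rintegral => u _; rewrite mulrC.
have [ho|ho] := boolP (odd (a + b) == odd k).
  by rewrite ET (T0 cf H0 hab (eqP ho)) mulr0 addr0.
have oo : odd (a + b + k) = true by rewrite oddD; move: ho; case: (odd (a + b)); case: (odd k).
rewrite -signr_odd oo expr1 mulN1r.
by rewrite subrr.
Qed.

Inductive hom (d : nat) : (R -> R) -> Prop :=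
| hom_mon a b : (a + b)%N = d -> hom d (fun t => cos t ^+ a * sin t ^+ b)
| hom_add q1 q2 : hom d q1 -> hom d q2 -> hom d (fun t => q1 t + q2 t)
| hom_scale c q : hom d q -> hom d (fun t => c * q t).

Lemma hom_ext d q q' : hom d q -> (forall t, q t = q' t) -> hom d q'.
Proof. by move=> h e; have -> : q' = q by apply/funext => t; rewrite e. Qed.

Lemma hom_cont d q : hom d q -> continuous q.
Proof.
have ccos : continuous (@cos R) by move=> x; exact: cont_of_der (is_derive_cos x).
have csin : continuous (@sin R) by move=> x; exact: cont_of_der (is_derive_sin x).
elim=> [a b _|q1 q2 _ c1 _ c2|c q0 _ cq] x.
- by apply: cvgM; exact: contX.
- by apply: cvgD; [exact: c1|exact: c2].
- by apply: cvgM; [exact: cvg_cst|exact: cq].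
Qed.

Lemma hom_lin d q (al be : R) : hom d q -> hom d.+1 (fun t => (al * cos t + be * sin t) * q t).
Proof.
elim=> [a b hab|q1 q2 _ h1 _ h2|c q0 _ hq].
- apply: (@hom_ext _ (fun t => al * (cos t ^+ a.+1 * sin t ^+ b) + be * (cos t ^+ a * sin t ^+ b.+1))).
    by apply: hom_add; apply: hom_scale; apply: hom_mon; rewrite -hab ?addSn ?addnS.
  move=> t; rewrite !exprS.
  by move: (cos t) (sin t) (cos t ^+ a) (sin t ^+ b) => c s' ca sb; rewrite alg7.
- apply: (@hom_ext _ (fun t => (al * cos t + be * sin t) * q1 t + (al * cos t + be * sin t) * q2 t)).
    exact: hom_add.
  by move=> t; rewrite mulrDr.
- apply: (@hom_ext _ (fun t => c * ((al * cos t + be * sin t) * q0 t))).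
    exact: hom_scale.
  by move=> t; rewrite mulrCA.
Qed.

Lemma hom_pow d e q (al be : R) : hom d q ->
  hom (e + d) (fun t => (al * cos t + be * sin t) ^+ e * q t).
Proof.
move=> h; elim: e => [|e IH].
  by apply: (hom_ext h) => t; rewrite expr0 mul1r.
apply: hom_ext (hom_lin al be IH) _ => t.
by rewrite exprS mulrA.
Qed.

Lemma hom_one : hom 0 (fun _ => 1).
Proof.
apply: (@hom_ext 0 (fun t => cos t ^+ 0 * sin t ^+ 0)); first exact: hom_mon.
by move=> t; rewrite !expr0 mulr1.
Qed.

Lemma hom_prod (I : eqType) (r : seq I) (m : I -> nat) (al be : I -> R) :
  hom (\sum_(i <- r) m i)%N (fun t => \prod_(i <- r) (al i * cos t + be i * sin t) ^+ m i).
Proof.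
elim: r => [|i r IH].
  by rewrite big_nil; apply: (hom_ext hom_one) => t; rewrite big_nil.
rewrite big_cons; apply: hom_ext (hom_pow (m i) (al i) (be i) IH) _ => t.
by rewrite big_cons.
Qed.

Definition Zp (f q : R -> R) := continuous q /\
  \int[mu]_(t in `[0, 2 * pi]) (q t * f t) = 0.

Lemma intc2 (h : R -> R) : continuous h -> mu.-integrable `[0, 2 * pi] (EFin \o h).
Proof. exact: cont_int. Qed.

Lemma contMf (f q : R -> R) : continuous f -> continuous q -> continuous (fun t => q t * f t).
Proof. by move=> cf cq x; apply: cvgM; [exact: cq|exact: cf]. Qed.

Lemma Zp_hom (f : R -> R) (k : nat) : continuous f -> (forall s, Sk f k s = 0) ->
  forall d q, hom d q -> (d <= k)%N -> Zp f q.
Proof.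
move=> cf H0 d q h dk; split; first exact: hom_cont h.
elim: h dk => [a b hab|q1 q2 h1 i1 h2 i2|c q0 h iq] dk.
- by apply: fullmono => //; rewrite hab.
- transitivity (\int[mu]_(t in `[0, 2 * pi]) (q1 t * f t) + \int[mu]_(t in `[0, 2 * pi]) (q2 t * f t)).
    have c1 := hom_cont h1; have c2 := hom_cont h2.
    rewrite -RintegralD //; [|exact: intc2 (contMf cf c1)|exact: intc2 (contMf cf c2)].
    by apply: eq_Rintegral => t _; rewrite mulrDl.
  by transitivity (0 + 0 : R); [congr (_ + _); [exact: i1|exact: i2]|rewrite addr0].
- transitivity (c * \int[mu]_(t in `[0, 2 * pi]) (q0 t * f t)).
    rewrite -RintegralZl //; last exact: intc2 (contMf cf (hom_cont h)).
    by apply: eq_Rintegral => t _; rewrite mulrA.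
  by rewrite iq // mulr0.
Qed.

Lemma Zp_sum (f : R -> R) (T : Type) (r : seq T) (qs : T -> R -> R) : continuous f ->
  (forall m, List.In m r -> Zp f (qs m)) -> Zp f (fun t => \sum_(m <- r) qs m t).
Proof.
move=> cf; elim: r => [|m r IH] H.
  split; first by under eq_fun do rewrite big_nil; exact: cst_continuous.
  under eq_Rintegral do rewrite big_nil mul0r.
  by rewrite Rintegral_cst // mul0r.
have [IHc IHi] := IH (fun m0 h => H m0 (or_intror h)).
have [cm im] := H m (or_introl erefl).
have cs : continuous (fun t => \sum_(m0 <- m :: r) qs m0 t).
  under eq_fun do rewrite big_cons.
  by move=> x; apply: cvgD; [exact: cm|exact: IHc].
split => //.
transitivity (\int[mu]_(t in `[0, 2 * pi]) (qs m t * f t) + \int[mu]_(t in `[0, 2 * pi]) ((\sum_(m0 <- r) qs m0 t) * f t)).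
  rewrite -RintegralD //; [|exact: intc2 (contMf cf cm)|exact: intc2 (contMf cf IHc)].
  by apply: eq_Rintegral => t _; rewrite big_cons mulrDl.
by transitivity (0 + 0 : R); [congr (_ + _); [exact: im|exact: IHi]|rewrite addr0].
Qed.

Lemma cont_sumf (T : Type) (r : seq T) (g : T -> R -> R) :
  (forall j, continuous (g j)) -> continuous (fun t => \sum_(j <- r) g j t).
Proof.
move=> cg; elim: r => [|j r IH].
  by under eq_fun do rewrite big_nil; exact: cst_continuous.
under eq_fun do rewrite big_cons.
by move=> x; apply: cvgD; [exact: cg|exact: IH].
Qed.
End Key.


Section Geo.
Context {R : realType} {n : nat}.
Local Open Scope classical_set_scope.
Notation mu := (@lebesgue_measure R).

Lemma dotvE (x y : 'rV[R]_n) : dotv x y = \sum_i x 0 i * y 0 i.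
Proof. by rewrite /dotv mxE; apply: eq_bigr => i _; rewrite mxE. Qed.

Lemma dotvC (x y : 'rV[R]_n) : dotv x y = dotv y x.
Proof. by rewrite !dotvE; apply: eq_bigr => i _; rewrite mulrC. Qed.

Lemma dot_lin (a b c d : R) (x v : 'rV[R]_n) :
  dotv (a *: x + b *: v) (c *: x + d *: v) =
  a * c * dotv x x + (a * d + b * c) * dotv x v + b * d * dotv v v.
Proof.
rewrite !dotvE !mulr_sumr -!big_split /=; apply: eq_bigr => i _.
rewrite !mxE.
by move: (x 0 i) (v 0 i) => p q; rewrite alg9.
Qed.

Lemma comb (a b c d e g : R) (x v : 'rV[R]_n) :
  a *: (b *: x + c *: v) + d *: (e *: x + g *: v) = (a * b + d * e) *: x + (a * c + d * g) *: v.
Proof.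
apply/rowP => i; rewrite !mxE.
by move: (x 0 i) (v 0 i) => p q; rewrite alg10.
Qed.

Lemma gc_shift (x v : 'rV[R]_n) s t : gc (gc x v s) (gc' x v s) t = gc x v (s + t).
Proof.
rewrite /gc /gc' comb cosD sinD; congr (_ *: _ + _ *: _).
  by move: (cos s) (sin s) (cos t) (sin t) => a b c d; rewrite alg11.
by move: (cos s) (sin s) (cos t) (sin t) => a b c d; rewrite alg12.
Qed.

Lemma gc'_shift (x v : 'rV[R]_n) s t : gc' (gc x v s) (gc' x v s) t = gc' x v (s + t).
Proof.
rewrite /gc /gc' comb cosD sinD; congr (_ *: _ + _ *: _).
  by move: (cos s) (sin s) (cos t) (sin t) => a b c d; rewrite alg13.
by move: (cos s) (sin s) (cos t) (sin t) => a b c d; rewrite alg14.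
Qed.

Lemma geod_shift (x v : 'rV[R]_n) s : unit_geod x v -> unit_geod (gc x v s) (gc' x v s).
Proof.
case=> hx hv hxv; rewrite /unit_geod /gc /gc' !dot_lin hx hv hxv.
have h := cos2Dsin2 s.
split.
- by move: h; move: (cos s) (sin s) => a b; exact: alg15.
- by move: h; move: (cos s) (sin s) => a b; exact: alg16.
- by move: (cos s) (sin s) => a b; exact: alg17.
Qed.

Lemma gc_entry (x v : 'rV[R]_n) t i : gc x v t 0 i = cos t * x 0 i + sin t * v 0 i.
Proof. by rewrite !mxE. Qed.

Lemma gc'_entry (x v : 'rV[R]_n) t i : gc' x v t 0 i = - sin t * x 0 i + cos t * v 0 i.
Proof. by rewrite !mxE. Qed.

Lemma tensE (F : 'rV[R]_n -> 'M[R]_n) y V :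
  tens F y V = \sum_j (\sum_l V 0 l * F y l j) * V 0 j.
Proof.
rewrite /tens mxE; apply: eq_bigr => j _; rewrite !mxE.
by congr (_ * _); apply: eq_bigr => l _; rewrite mxE.
Qed.

Lemma contf (F : 'rV[R]_n -> 'M[R]_n) (x v : 'rV[R]_n) :
  (forall i j, continuous (fun y => F y i j)) ->
  continuous (fun t => tens F (gc x v t) (gc' x v t)).
Proof.
move=> cF.
have ccos : continuous (@cos R) by move=> z; exact: cont_of_der (is_derive_cos z).
have csin : continuous (@sin R) by move=> z; exact: cont_of_der (is_derive_sin z).
have cgc : continuous (gc x v).
  by move=> t; apply: cvgD; apply: cvgZl; [exact: ccos|exact: csin].
have ce : forall l, continuous (fun t => gc' x v t 0 l).
  move=> l; under eq_fun do rewrite gc'_entry.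
  move=> t; apply: cvgD; apply: cvgM; try exact: cvg_cst.
  - by apply: cvgN; exact: csin.
  - exact: ccos.
have cFt : forall l j, continuous (fun t => F (gc x v t) l j).
  by move=> l j t; exact: (continuous_comp (cgc t) (cF l j (gc x v t))).
under eq_fun do rewrite tensE.
apply: cont_sumf => j t; apply: cvgM; last exact: ce.
apply: cont_sumf => l {}t; apply: cvgM; [exact: ce|exact: cFt].
Qed.

End Geo.

Local Coercion mpoly.fun_of_multinom : mpoly.multinom >-> Funclass.
Unset Implicit Arguments. Set Strict Implicit.

Theorem lemma3p2 (R : realType) (n k : nat) (F : 'rV[R]_n -> 'M[R]_n)
  (Fsym : forall y, (F y)^T = F y)
  (Fsmooth : forall i j, smooth (fun y => F y i j))
  (HI : forall x v : 'rV[R]_n, unit_geod x v -> Ik k F x v = 0%E) :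
  (forall x v : 'rV[R]_n, unit_geod x v -> forall t : R,
     tens F (gc x v t) (gc' x v t)
     = (-1) ^+ k * tens F (gc x v (t + pi)) (gc' x v (t + pi)))
  /\
  (forall x v : 'rV[R]_n, unit_geod x v ->
   forall p : mpoly.mpoly n R, pdeg_le p k ->
     (\int[lebesgue_measure]_(t in `[0%R, (2 * pi : R)%R])
        (peval p (gc x v t) * tens F (gc x v t) (gc' x v t))%:E)%E = 0%E).
Proof.
have cF : forall i j, continuous (fun y => F y i j).
  by move=> i j; have [h _] := Fsmooth i j [::].
have key0 : forall x v, unit_geod x v ->
    continuous (fun t => tens F (gc x v t) (gc' x v t)) /\
    forall s, Sk (fun t => tens F (gc x v t) (gc' x v t)) k s = 0.
  move=> x v hxv; split; first exact: contf.
  move=> s; have := HI _ _ (geod_shift s hxv); rewrite /Ik /Sk /Rintegral => h.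
  rewrite -[RHS]fine0 -h; congr fine; apply: eq_integral => t _.
  by rewrite gc_shift gc'_shift.
split.
  move=> x v hxv t; have [cf H0] := key0 x v hxv.
  exact: (parity cf H0 t).
move=> x v hxv p hp; have [cf H0] := key0 x v hxv.
set f := fun t => tens F (gc x v t) (gc' x v t).
pose qs := fun (m : mpoly.multinom n) (t : R) =>
  mpoly.mcoeff m p * \prod_(i < n) (x 0 i * cos t + v 0 i * sin t) ^+ m i.
have Z := @Zp_sum R f _ (mpoly.msupp p) qs cf.
have [_ Zi] : Zp f (fun t => \sum_(m <- mpoly.msupp p) qs m t).
  apply: Z => m hm; apply: (Zp_hom cf H0 (d := mpoly.mdeg m)).
    apply: hom_scale; rewrite mpoly.mdegE; exact: hom_prod.
  move: hp hm; rewrite /pdeg_le; elim: (mpoly.msupp p) => [|m0 r IH] //= /andP[h1 h2] [<-|hm] //.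
  exact: IH.
have int : lebesgue_measure.-integrable `[0%R, (2 * pi : R)%R]
    (fun t => (peval p (gc x v t) * tens F (gc x v t) (gc' x v t))%:E).
  apply: (@cont_int R (fun t => peval p (gc x v t) * f t)).
  have -> : (fun t => peval p (gc x v t) * f t) = (fun t => (\sum_(m <- mpoly.msupp p) qs m t) * f t).
    apply/funext => t; rewrite /peval mpoly.mevalE; congr (_ * _).
    apply: eq_bigr => m _; congr (_ * _); apply: eq_bigr => i _.
    by rewrite gc_entry (mulrC (cos t)) (mulrC (sin t)).
  apply: contMf => //.
  apply: cont_sumf => m; rewrite /qs; apply: cont_scale.
  exact: (hom_cont (hom_prod (index_enum _) (mpoly.fun_of_multinom m) (fun i => x 0 i) (fun i => v 0 i))).
rewrite -(fineK (integrable_fin_num _ int)) //.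
congr (_%:E); rewrite -[RHS]Zi.
rewrite -/(Rintegral _ _ _); apply: eq_Rintegral => t _.
rewrite /peval mpoly.mevalE; congr (_ * _).
apply: eq_bigr => m _; congr (_ * _); apply: eq_bigr => i _.
by rewrite gc_entry (mulrC (cos t)) (mulrC (sin t)).
Qed.
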